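(* Let $\mathbb C$ be a homological category with finite colimits, and let $x\colon X\to A$, $y\colon Y\to A$ be morphisms whose images are normal monomorphisms. If $m$ is an internal multiplication $X\times Y\to A$ over $(A,1_A)$, then there is a unique morphism $p\colon A_3\to A$ with $p\gamma_1=m$, and this $p$ is an internal pregroupoid structure on the span $A/X\leftarrow A\to A/Y$.
   Context: A homological category is a regular pointed category in which the Split Short Five Lemma holds; images are taken in the (regular epi, mono) factorization; a normal monomorphism is a kernel of some morphism. Notation: $\iota_i$ coproduct injections, $[a,b]$ copairing, $\langle\cdot\rangle$ pairing. $(A+X)\times_A(A+Y)$ is the pullback of $[1,0]\colon A+X\to A$ and $[1,0]\colon A+Y\to A$, with projections $\pi_1,\pi_2$. An internal multiplication $X\times Y\to A$ over $(A,1_A)$ is a morphism $m\colon (A+X)\times_A(A+Y)\to A$ with $m\langle 1,\iota_1[1,0]\rangle=[1,x]$ and $m\langle\iota_1[1,0],1\rangle=[1,y]$. $A_3=A\times_{A/X}A\times_{A/Y}A$ is the limit of $A\xrightarrow{\mathsf{coker}(x)}A/X\xleftarrow{\mathsf{coker}(x)}A\xrightarrow{\mathsf{coker}(y)}A/Y\xleftarrow{\mathsf{coker}(y)}A$, and $\gamma_1=\langle [1,x]\pi_1,[1,0]\pi_1,[1,y]\pi_2\rangle$. An internal pregroupoid structure on the span $A/X\leftarrow A\to A/Y$ is a morphism $p\colon A_3\to A$ with $p\langle\pi_1,\pi_2,\pi_2\rangle=\pi_1$ on $A\times_{A/X}A$ and $p\langle\pi_1,\pi_1,\pi_2\rangle=\pi_2$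 on $A\times_{A/Y}A$ ($\pi_1,\pi_2$ the kernel-pair projections). *)

(* Defs.v *)
Set Implicit Arguments.
Unset Strict Implicit.

Record Category := {
  Obj :> Type;
  Hom : Obj -> Obj -> Type;
  idm : forall a, Hom a a;
  comp : forall a b c, Hom b c -> Hom a b -> Hom a c;
  comp_assoc : forall a b c d (h : Hom c d) (g : Hom b c) (f : Hom a b),
      comp h (comp g f) = comp (comp h g) f;
  comp_id_l : forall a b (f : Hom a b), comp (idm b) f = f;
  comp_id_r : forall a b (f : Hom a b), comp f (idm a) = f
}.

Arguments Hom {C} : rename.
Arguments idm {C} a : rename.
Arguments comp {C a b c} : rename.
Notation "g \o f" := (comp g f) (at level 40, left associativity).

Section Notions.
Variable C : Category.

Definition is_iso {a b : C} (f : Hom a b) : Prop :=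
  exists g : Hom b a, g \o f = idm a /\ f \o g = idm b.

Definition is_mono {a b : C} (f : Hom a b) : Prop :=
  forall t (g h : Hom t a), f \o g = f \o h -> g = h.

Definition is_initial (z : C) : Prop := forall b : C, exists! f : Hom z b, True.
Definition is_terminal (z : C) : Prop := forall b : C, exists! f : Hom b z, True.
Definition is_zero_obj (z : C) : Prop := is_initial z /\ is_terminal z.

Definition is_zero_mor {a b : C} (f : Hom a b) : Prop :=
  exists (z : C) (g : Hom a z) (h : Hom z b), is_zero_obj z /\ f = h \o g.

Definition pointed : Prop := exists z : C, is_zero_obj z.

Definition is_pullback {a b c P : C} (f : Hom a b) (g : Hom c b)
  (p1 : Hom P a) (p2 : Hom P c) : Prop :=
  f \o p1 = g \o p2 /\
  forall (T : C) (u : Hom T a) (v : Hom T c), f \o u = g \o v ->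
    exists! h : Hom T P, p1 \o h = u /\ p2 \o h = v.

Definition is_coequalizer {a b q : C} (f g : Hom a b) (e : Hom b q) : Prop :=
  e \o f = e \o g /\
  forall (T : C) (u : Hom b T), u \o f = u \o g ->
    exists! h : Hom q T, h \o e = u.

Definition is_coproduct {a b S : C} (i1 : Hom a S) (i2 : Hom b S) : Prop :=
  forall (T : C) (f : Hom a T) (g : Hom b T),
    exists! h : Hom S T, h \o i1 = f /\ h \o i2 = g.

Definition is_kernel {a b K : C} (f : Hom a b) (k : Hom K a) : Prop :=
  is_zero_mor (f \o k) /\
  forall (T : C) (u : Hom T a), is_zero_mor (f \o u) ->
    exists! h : Hom T K, k \o h = u.

Definition is_cokernel {a b Q : C} (f : Hom a b) (q : Hom b Q) : Prop :=
  is_zero_mor (q \o f) /\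
  forall (T : C) (u : Hom b T), is_zero_mor (u \o f) ->
    exists! h : Hom Q T, h \o q = u.

Definition regular_epi {b q : C} (e : Hom b q) : Prop :=
  exists (a : C) (f g : Hom a b), is_coequalizer f g e.

Definition normal_mono {K a : C} (k : Hom K a) : Prop :=
  exists (b : C) (f : Hom a b), is_kernel f k.

Definition has_finite_limits : Prop :=
  (exists t : C, is_terminal t) /\
  forall (a b c : C) (f : Hom a b) (g : Hom c b),
    exists (P : C) (p1 : Hom P a) (p2 : Hom P c), is_pullback f g p1 p2.

Definition has_finite_colimits : Prop :=
  (exists i : C, is_initial i) /\
  (forall a b : C, exists (S : C) (i1 : Hom a S) (i2 : Hom b S), is_coproduct i1 i2) /\
  (forall (a b : C) (f g : Hom a b), exists (q : C) (e : Hom b q), is_coequalizer f g e).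

Definition regular : Prop :=
  has_finite_limits /\
  (forall (a b K : C) (f : Hom a b) (k1 k2 : Hom K a), is_pullback f f k1 k2 ->
     exists (q : C) (e : Hom a q), is_coequalizer k1 k2 e) /\
  (forall (a b c P : C) (e : Hom a b) (h : Hom c b) (p1 : Hom P a) (p2 : Hom P c),
     regular_epi e -> is_pullback e h p1 p2 -> regular_epi p2).

Definition split_short_five : Prop :=
  forall (K A B K' A' B' : C)
    (k : Hom K A) (p : Hom A B) (s : Hom B A)
    (k' : Hom K' A') (p' : Hom A' B') (s' : Hom B' A')
    (u : Hom K K') (v : Hom A A') (w : Hom B B'),
    p \o s = idm B -> p' \o s' = idm B' ->
    is_kernel p k -> is_kernel p' k' ->
    v \o k = k' \o u -> p' \o v = w \o p -> v \o s = s' \o w ->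
    is_iso u -> is_iso w -> is_iso v.

Definition homological : Prop := pointed /\ regular /\ split_short_five.

Definition image_is_normal {X A : C} (f : Hom X A) : Prop :=
  exists (I : C) (e : Hom X I) (mo : Hom I A),
    regular_epi e /\ is_mono mo /\ f = mo \o e /\ normal_mono mo.

Definition is_copair {a b S T : C} (i1 : Hom a S) (i2 : Hom b S)
  (f : Hom a T) (g : Hom b T) (h : Hom S T) : Prop :=
  h \o i1 = f /\ h \o i2 = g.

Definition is_copair_id_zero {A X S : C} (i1 : Hom A S) (i2 : Hom X S)
  (h : Hom S A) : Prop :=
  h \o i1 = idm A /\ is_zero_mor (h \o i2).

(* A_3 = A x_{A/X} A x_{A/Y} A with its three projections *)
Definition is_A3 {A QX QY A3 : C} (qx : Hom A QX) (qy : Hom A QY)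
  (a1 a2 a3 : Hom A3 A) : Prop :=
  qx \o a1 = qx \o a2 /\ qy \o a2 = qy \o a3 /\
  forall (T : C) (b1 b2 b3 : Hom T A),
    qx \o b1 = qx \o b2 -> qy \o b2 = qy \o b3 ->
    exists! h : Hom T A3, a1 \o h = b1 /\ a2 \o h = b2 /\ a3 \o h = b3.

(* m : (A+X) x_A (A+Y) -> A is an internal multiplication X x Y -> A over (A,1_A):
   m <1, i1[1,0]> = [1,x]  and  m <i1[1,0], 1> = [1,y];
   here the pairings <_,_> are the (unique) maps into the pullback P with the
   prescribed components. *)
Definition internal_multiplication {A AX AY P : C}
  (iX1 : Hom A AX) (iY1 : Hom A AY)
  (rX0 : Hom AX A) (rY0 : Hom AY A) (cX : Hom AX A) (cY : Hom AY A)
  (pi1 : Hom P AX) (pi2 : Hom P AY) (m : Hom P A) : Prop :=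
  (forall u : Hom AX P, pi1 \o u = idm AX -> pi2 \o u = iY1 \o rX0 -> m \o u = cX) /\
  (forall v : Hom AY P, pi1 \o v = iX1 \o rY0 -> pi2 \o v = idm AY -> m \o v = cY).

(* p gamma_1 = m, where gamma_1 = <[1,x]pi1, [1,0]pi1, [1,y]pi2> : P -> A_3 *)
Definition factors_gamma1 {A AX AY P A3 : C}
  (rX0 : Hom AX A) (cX : Hom AX A) (cY : Hom AY A)
  (pi1 : Hom P AX) (pi2 : Hom P AY) (a1 a2 a3 : Hom A3 A)
  (m : Hom P A) (p : Hom A3 A) : Prop :=
  forall g : Hom P A3,
    a1 \o g = cX \o pi1 -> a2 \o g = rX0 \o pi1 -> a3 \o g = cY \o pi2 ->
    p \o g = m.

Definition internal_pregroupoid {A QX QY A3 : C} (qx : Hom A QX) (qy : Hom A QY)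
  (a1 a2 a3 : Hom A3 A) (p : Hom A3 A) : Prop :=
  (forall (K : C) (k1 k2 : Hom K A), is_pullback qx qx k1 k2 ->
     forall t : Hom K A3, a1 \o t = k1 -> a2 \o t = k2 -> a3 \o t = k2 ->
       p \o t = k1) /\
  (forall (K : C) (k1 k2 : Hom K A), is_pullback qy qy k1 k2 ->
     forall t : Hom K A3, a1 \o t = k1 -> a2 \o t = k1 -> a3 \o t = k2 ->
       p \o t = k2).

End Notions.

(* Main.v *)
Require Import Defs.
Set Implicit Arguments.

Ltac nf := repeat rewrite <- comp_assoc; repeat rewrite comp_id_l; repeat rewrite comp_id_r.

Section Gen.
Variable C : Category.

Definition is_epi {a b : C} (f : Hom a b) := forall t (g h : Hom b t), g \o f = h \o f -> g = h.

Lemma rw2 {b c d : C} {f : Hom c d} {g : Hom b c} {h : Hom b d} :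
  f \o g = h -> forall e (x : Hom e b), f \o (g \o x) = h \o x.
Proof. intros E e x. rewrite comp_assoc, E. reflexivity. Qed.

Lemma zm_l {a b c : C} (f : Hom a b) (g : Hom b c) : is_zero_mor f -> is_zero_mor (g \o f).
Proof. intros [z [u [v [Hz ->]]]]. exists z, u, (g \o v). split; auto. apply comp_assoc. Qed.

Lemma zm_r {a b c : C} (f : Hom b c) (g : Hom a b) : is_zero_mor f -> is_zero_mor (f \o g).
Proof. intros [z [u [v [Hz ->]]]]. exists z, (u \o g), v. split; auto. symmetry; apply comp_assoc. Qed.

Lemma term_eq (t : C) : is_terminal t -> forall a (f g : Hom a t), f = g.
Proof. intros H a f g. destruct (H a) as [w [_ Hw]]. rewrite <- (Hw f I), (Hw g I). reflexivity. Qed.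

Lemma init_eq (t : C) : is_initial t -> forall a (f g : Hom t a), f = g.
Proof. intros H a f g. destruct (H a) as [w [_ Hw]]. rewrite <- (Hw f I), (Hw g I). reflexivity. Qed.

Lemma zm_eq {a b : C} (f g : Hom a b) : is_zero_mor f -> is_zero_mor g -> f = g.
Proof.
  intros [z [u [v [Hz ->]]]] [z' [u' [v' [Hz' ->]]]].
  destruct (proj1 Hz z') as [t _].
  rewrite (init_eq (proj1 Hz) _ v (v' \o t)).
  rewrite (term_eq (proj2 Hz') _ u' (t \o u)).
  symmetry; apply comp_assoc.
Qed.

Lemma zm_ex : pointed C -> forall a b : C, exists f : Hom a b, is_zero_mor f.
Proof.
  intros [z Hz] a b. destruct (proj1 Hz b) as [v _]. destruct (proj2 Hz a) as [u _].
  exists (v \o u), z, u, v. auto.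
Qed.

Lemma mono_kernel {a b K : C} (f : Hom a b) (k : Hom K a) : is_kernel f k -> is_mono k.
Proof.
  intros [Hz Hu] t g h E.
  assert (Z : is_zero_mor (f \o (k \o g))) by (rewrite comp_assoc; apply zm_r; exact Hz).
  destruct (Hu t (k \o g) Z) as [w [_ Hw]].
  rewrite <- (Hw g eq_refl), (Hw h (eq_sym E)). reflexivity.
Qed.

Lemma coeq_epi {a b q : C} (f g : Hom a b) (e : Hom b q) : is_coequalizer f g e -> is_epi e.
Proof.
  intros [He Hu] t x y E.
  assert (Hc : (x \o e) \o f = (x \o e) \o g) by (nf; rewrite He; reflexivity).
  destruct (Hu t (x \o e) Hc) as [w [_ Hw]].
  rewrite <- (Hw x eq_refl), (Hw y (eq_sym E)). reflexivity.
Qed.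

Lemma regepi_epi {b q : C} (e : Hom b q) : regular_epi e -> is_epi e.
Proof. intros [a [f [g H]]]. exact (coeq_epi H). Qed.

Lemma iso_mono {a b : C} (j : Hom a b) : is_iso j -> is_mono j.
Proof. intros [i [H1 H2]] t g h E.
  rewrite <- (comp_id_l g), <- (comp_id_l h), <- H1. nf. rewrite E. reflexivity. Qed.

Lemma iso_epi {a b : C} (j : Hom a b) : is_iso j -> is_epi j.
Proof. intros [i [H1 H2]] t g h E.
  rewrite <- (comp_id_r g), <- (comp_id_r h), <- H2. rewrite !comp_assoc, E. reflexivity. Qed.

Lemma strong {b q S D : C} (e : Hom b q) (j : Hom S D) (h : Hom q D) (g : Hom b S) :
  regular_epi e -> is_mono j -> h \o e = j \o g -> exists t, j \o t = h /\ t \o e = g.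
Proof.
  intros He Hj E. pose proof He as [a [f1 [f2 [Hc Hu]]]].
  assert (G : g \o f1 = g \o f2).
  { apply Hj. rewrite !comp_assoc, <- E. nf. rewrite Hc. reflexivity. }
  destruct (Hu _ g G) as [t [Ht _]]. exists t. split; auto.
  apply (regepi_epi He). rewrite <- comp_assoc, Ht. auto.
Qed.

Lemma pb_ext {a b c P : C} (f : Hom a b) (g : Hom c b) (p1 : Hom P a) (p2 : Hom P c)
  : is_pullback f g p1 p2 -> forall T (x y : Hom T P), p1 \o x = p1 \o y -> p2 \o x = p2 \o y -> x = y.
Proof.
  intros [Hs Hu] T x y E1 E2.
  assert (Hc : f \o (p1 \o x) = g \o (p2 \o x)) by (rewrite !comp_assoc, Hs; reflexivity).
  destruct (Hu T _ _ Hc) as [w [_ Hw]].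
  rewrite <- (Hw x (conj eq_refl eq_refl)), (Hw y (conj (eq_sym E1) (eq_sym E2))). reflexivity.
Qed.

Lemma pb_ex {a b c P : C} (f : Hom a b) (g : Hom c b) (p1 : Hom P a) (p2 : Hom P c)
  : is_pullback f g p1 p2 -> forall T (u : Hom T a) (v : Hom T c), f \o u = g \o v ->
    exists h, p1 \o h = u /\ p2 \o h = v.
Proof. intros [Hs Hu] T u v E. destruct (Hu T u v E) as [w [Hw _]]. eauto. Qed.

Lemma pb_sym {a b P : C} (f : Hom a b) (p1 p2 : Hom P a) :
  is_pullback f f p1 p2 -> is_pullback f f p2 p1.
Proof.
  intros [Hs Hu]. split; auto. intros T u v E.
  destruct (Hu T v u (eq_sym E)) as [w [[W1 W2] Hw]]. exists w. split; auto.
  intros w' [A1 A2]. apply Hw. auto.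
Qed.

Lemma pb_mono {a b c P : C} (f : Hom a b) (g : Hom c b) (p1 : Hom P a) (p2 : Hom P c)
  : is_pullback f g p1 p2 -> is_mono f -> is_mono p2.
Proof.
  intros H Hf T x y E. apply (pb_ext H); auto.
  apply Hf. rewrite !comp_assoc, (proj1 H). nf. rewrite E. reflexivity.
Qed.

Lemma cop_ext {a b S : C} (i1 : Hom a S) (i2 : Hom b S) : is_coproduct i1 i2 ->
  forall T (x y : Hom S T), x \o i1 = y \o i1 -> x \o i2 = y \o i2 -> x = y.
Proof.
  intros H T x y E1 E2. destruct (H T (x \o i1) (x \o i2)) as [w [_ Hw]].
  rewrite <- (Hw x (conj eq_refl eq_refl)), (Hw y (conj (eq_sym E1) (eq_sym E2))). reflexivity.
Qed.

(* joint extremal epi from split short five *)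
Lemma jx (HS : split_short_five C) {K B D S : C} (q : Hom B D) (s : Hom D B) (k : Hom K B)
  (j : Hom S B) (s' : Hom D S) (k' : Hom K S) :
  q \o s = idm D -> is_kernel q k -> is_mono j -> s = j \o s' -> k = j \o k' -> is_iso j.
Proof.
  intros Hqs Hk Hj Es Ek.
  assert (Hid : forall x : C, is_iso (idm x)) by (intro x; exists (idm x); split; apply comp_id_l).
  apply (HS K S D K B D k' (q \o j) s' k q s (idm K) j (idm D)); auto.
  - nf. rewrite <- Es. exact Hqs.
  - destruct Hk as [Hz Hu]. split.
    + nf. rewrite <- Ek. exact Hz.
    + intros T u Hzu. assert (Z : is_zero_mor (q \o (j \o u))) by (rewrite comp_assoc; exact Hzu).
      destruct (Hu T _ Z) as [h [Hh Hh']]. exists h. split.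
      * apply Hj. rewrite comp_assoc, <- Ek. exact Hh.
      * intros h' E. apply Hh'. rewrite Ek. nf. rewrite E. reflexivity.
  - rewrite comp_id_r. auto.
  - rewrite comp_id_l. auto.
  - rewrite comp_id_r. auto.
Qed.

Lemma prod_ex (HL : has_finite_limits C) (B T : C) :
  exists (PBT : C) (q1 : Hom PBT B) (q2 : Hom PBT T),
    forall (W : C) (u : Hom W B) (v : Hom W T), exists! h, q1 \o h = u /\ q2 \o h = v.
Proof.
  destruct HL as [[tm Htm] Hpb].
  destruct (Htm B) as [tb _]. destruct (Htm T) as [tt _].
  destruct (Hpb _ _ _ tb tt) as [P [p1 [p2 [Hs Hu]]]].
  exists P, p1, p2. intros W u v. apply Hu. apply (term_eq Htm).
Qed.

Lemma eq_ex (HL : has_finite_limits C) {B T : C} (u v : Hom B T) :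
  exists (E : C) (j : Hom E B), u \o j = v \o j /\
    (forall (W : C) (w : Hom W B), u \o w = v \o w -> exists h, j \o h = w) /\ is_mono j.
Proof.
  destruct (prod_ex HL B T) as [PBT [q1 [q2 Hp]]].
  destruct (Hp B (idm B) u) as [pu [[Pu1 Pu2] _]].
  destruct (Hp B (idm B) v) as [pv [[Pv1 Pv2] _]].
  destruct (proj2 HL _ _ _ pu pv) as [E [e1 [e2 HE]]].
  assert (E12 : e1 = e2).
  { pose proof (proj1 HE) as Hs.
    transitivity ((q1 \o pu) \o e1); [rewrite Pu1, comp_id_l; auto|].
    transitivity ((q1 \o pv) \o e2); [|rewrite Pv1, comp_id_l; auto].
    nf. rewrite Hs. reflexivity. }
  subst e2.
  assert (Huv : u \o e1 = v \o e1).
  { pose proof (proj1 HE) as Hs. rewrite <- Pu2, <- Pv2. nf. rewrite Hs. reflexivity. }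
  exists E, e1. split; [exact Huv|split].
  - intros W w Hw. cut (exists h, e1 \o h = w /\ e1 \o h = w); [intros [h [? ?]]; eauto|].
    apply (pb_ex HE).
    destruct (Hp W w (u \o w)) as [z [_ Hz]].
    rewrite <- (Hz (pu \o w)), <- (Hz (pv \o w)); auto.
    + split; rewrite comp_assoc; [rewrite Pv1; apply comp_id_l| rewrite Pv2; auto].
    + split; rewrite comp_assoc; [rewrite Pu1; apply comp_id_l| rewrite Pu2; auto].
  - intros W x y Exy. apply (pb_ext HE); auto.
Qed.

Lemma je (HS : split_short_five C) (HL : has_finite_limits C) {K B D T : C}
  (q : Hom B D) (s : Hom D B) (k : Hom K B) (u v : Hom B T) :
  q \o s = idm D -> is_kernel q k -> u \o k = v \o k -> u \o s = v \o s -> u = v.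
Proof.
  intros Hqs Hk Ek Es.
  destruct (eq_ex HL u v) as [E [j [Hj [Hu Hm]]]].
  destruct (Hu _ s Es) as [s' Hs']. destruct (Hu _ k Ek) as [k' Hk'].
  destruct (@jx HS K B D E q s k j s' k' Hqs Hk Hm (eq_sym Hs') (eq_sym Hk')) as [i [H1 H2]].
  rewrite <- (comp_id_r u), <- (comp_id_r v), <- H2. rewrite !comp_assoc, Hj. reflexivity.
Qed.

Lemma ker_ex (HP : pointed C) (HL : has_finite_limits C) {A B : C} (f : Hom A B) :
  exists (K : C) (k : Hom K A), is_kernel f k.
Proof.
  destruct HP as [Z HZ]. destruct (proj1 HZ B) as [zb _].
  destruct (proj2 HL _ _ _ f zb) as [K [p1 [p2 Hpb]]].
  exists K, p1. split.
  - rewrite (proj1 Hpb). exists Z, p2, zb. auto.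
  - intros T u Hu. destruct (proj2 HZ T) as [tz _].
    destruct (pb_ex Hpb _ u tz) as [h [H1 H2]].
    { apply zm_eq; auto. exists Z, tz, zb. auto. }
    exists h. split; auto. intros h' E. apply (pb_ext Hpb); [rewrite E; auto|apply (term_eq (proj2 HZ))].
Qed.

Lemma ext_reg (HR : regular C) {B D : C} (f : Hom B D) :
  (forall S (j : Hom S D) (g : Hom B S), is_mono j -> f = j \o g -> is_iso j) -> regular_epi f.
Proof.
  intros Hx. destruct HR as [HL [Hkp Hst]].
  destruct (proj2 HL _ _ _ f f) as [R [k1 [k2 HR]]].
  destruct (Hkp _ _ _ _ _ _ HR) as [Q [q Hq]].
  destruct (proj2 Hq _ f (proj1 HR)) as [j [Hjq _]].
  assert (Hjm : is_mono j).
  { destruct (proj2 HL _ _ _ j j) as [L [l1 [l2 HLp]]].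
    assert (Hl : l1 = l2).
    { destruct (proj2 HL _ _ _ q l1) as [M [m1 [m2 HM]]].
      assert (Rm2 : regular_epi m2) by (eapply Hst; [exists R, k1, k2; exact Hq | exact HM]).
      destruct (proj2 HL _ _ _ q (l2 \o m2)) as [N [n1 [n2 HN]]].
      assert (Rn2 : regular_epi n2) by (eapply Hst; [exists R, k1, k2; exact Hq | exact HN]).
      assert (Ef : f \o (m1 \o n2) = f \o n1).
      { rewrite <- Hjq. nf. rewrite (proj1 HN), (rw2 (proj1 HM)). nf.
        rewrite (rw2 (proj1 HLp)). nf. reflexivity. }
      destruct (pb_ex HR _ _ _ Ef) as [w [W1 W2]].
      apply (regepi_epi Rm2). apply (regepi_epi Rn2). nf.
      transitivity (q \o (m1 \o n2)).
      { symmetry. rewrite comp_assoc, (proj1 HM). nf. reflexivity. }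
      rewrite <- W1, (rw2 (proj1 Hq)). nf. rewrite W2, (proj1 HN). nf. reflexivity. }
    intros T a b E. destruct (pb_ex HLp _ a b E) as [h [H1 H2]].
    rewrite <- H1, <- H2, Hl. reflexivity. }
  destruct (Hx Q j q Hjm (eq_sym Hjq)) as [ji [Hi1 Hi2]].
  exists R, k1, k2. split.
  - rewrite <- Hjq. nf. rewrite (proj1 Hq). reflexivity.
  - intros T u Hu. destruct (proj2 Hq T u Hu) as [t [Ht Htu]].
    exists (t \o ji). split.
    + rewrite <- Hjq. nf. rewrite (rw2 Hi1), comp_id_l. exact Ht.
    + intros h' E. assert (Et : t = h' \o j) by (apply Htu; rewrite <- comp_assoc, Hjq; exact E).
      subst t. rewrite <- comp_assoc, Hi2, comp_id_r. reflexivity.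
Qed.

Lemma l3 (HR : regular C) (HS : split_short_five C) (HP : pointed C) {B Q K T : C}
  (e : Hom B Q) (ke : Hom K B) (h : Hom B T) :
  regular_epi e -> is_kernel e ke -> is_zero_mor (h \o ke) -> exists h', h' \o e = h.
Proof.
  intros He Hk Hz. destruct HR as [HL [Hkp Hst]].
  destruct (proj2 HL _ _ _ e e) as [R [k1 [k2 HRp]]].
  destruct (pb_ex HRp _ (idm B) (idm B) eq_refl) as [d [D1 D2]].
  destruct (ker_ex HP HL k2) as [K2 [kk Hkk]].
  assert (Hh : h \o k1 = h \o k2).
  { apply (je HS HL (q:=k2) (k:=kk) d); auto.
    - apply zm_eq.
      + assert (Z : is_zero_mor (e \o (k1 \o kk))).
        { rewrite comp_assoc, (proj1 HRp), <- comp_assoc. apply zm_l. exact (proj1 Hkk). }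
        destruct (proj2 Hk _ _ Z) as [w [Hw _]]. rewrite <- comp_assoc, <- Hw, comp_assoc.
        apply zm_r. exact Hz.
      + rewrite <- comp_assoc. apply zm_l. exact (proj1 Hkk).
    - nf. rewrite D1, D2. reflexivity. }
  destruct He as [W [f1 [f2 [Hc Hu]]]].
  destruct (pb_ex HRp _ f1 f2 Hc) as [w [W1 W2]].
  destruct (Hu T h) as [h' [Hh' _]].
  { rewrite <- W1, <- W2, !comp_assoc, Hh. reflexivity. }
  eauto.
Qed.

Lemma A3ext {A QX QY A3 : C} {qx : Hom A QX} {qy : Hom A QY} {a1 a2 a3 : Hom A3 A} :
  is_A3 qx qy a1 a2 a3 -> forall T (f g : Hom T A3),
  a1 \o f = a1 \o g -> a2 \o f = a2 \o g -> a3 \o f = a3 \o g -> f = g.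
Proof.
  intros [H1 [H2 Hu]] T f g E1 E2 E3.
  assert (C1 : qx \o (a1 \o f) = qx \o (a2 \o f)) by (rewrite !comp_assoc, H1; reflexivity).
  assert (C2 : qy \o (a2 \o f) = qy \o (a3 \o f)) by (rewrite !comp_assoc, H2; reflexivity).
  destruct (Hu T _ _ _ C1 C2) as [w [_ Hw]].
  rewrite <- (Hw f), (Hw g); auto.
Qed.

Lemma A3zero (HP : pointed C) {A QX QY A3 : C} {qx : Hom A QX} {qy : Hom A QY} {a1 a2 a3 : Hom A3 A} :
  is_A3 qx qy a1 a2 a3 -> forall T (f : Hom T A3),
  is_zero_mor (a1 \o f) -> is_zero_mor (a2 \o f) -> is_zero_mor (a3 \o f) -> is_zero_mor f.
Proof.
  intros H T f Z1 Z2 Z3. destruct (zm_ex HP T A3) as [z Hz].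
  replace f with z; auto. apply (A3ext H); apply zm_eq; auto; apply zm_l; auto.
Qed.

Lemma nm (HP : pointed C) {X I A Q : C} (x : Hom X A) (e : Hom X I) (mo : Hom I A) (q : Hom A Q) :
  regular_epi e -> normal_mono mo -> x = mo \o e -> is_cokernel x q -> is_kernel q mo.
Proof.
  intros He [B [phi Hphi]] Ex Hq. split.
  - destruct (zm_ex HP I Q) as [z Hz]. replace (q \o mo) with z; auto.
    apply (regepi_epi He). apply zm_eq. apply zm_r; auto.
    rewrite <- comp_assoc, <- Ex. exact (proj1 Hq).
  - intros T u Hu.
    assert (Zx : is_zero_mor (phi \o x)) by (rewrite Ex, comp_assoc; apply zm_r; exact (proj1 Hphi)).
    destruct (proj2 Hq _ _ Zx) as [phi' [Hp' _]].
    apply (proj2 Hphi). rewrite <- Hp', <- comp_assoc. apply zm_l. exact Hu.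
Qed.

Lemma kp_ker (HP : pointed C) {I A Q K : C} (q : Hom A Q) (mo : Hom I A) (k1 k2 : Hom K A) :
  is_kernel q mo -> is_pullback q q k1 k2 ->
  exists w : Hom I K, k1 \o w = mo /\ is_zero_mor (k2 \o w) /\ is_kernel k2 w.
Proof.
  intros Hk Hpb. destruct (zm_ex HP I A) as [z Hz].
  destruct (pb_ex Hpb _ mo z) as [w [W1 W2]].
  { apply zm_eq; [exact (proj1 Hk)| apply zm_l; auto]. }
  exists w. rewrite W2. split; [auto|split; [auto|split; [rewrite W2; auto|]]].
  intros T u Hu.
  assert (Z : is_zero_mor (q \o (k1 \o u))) by (rewrite comp_assoc, (proj1 Hpb), <- comp_assoc; apply zm_l; exact Hu).
  destruct (proj2 Hk _ _ Z) as [h [Hh Hh']].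
  exists h. split.
  - apply (pb_ext Hpb).
    + rewrite comp_assoc, W1. auto.
    + apply zm_eq; auto. rewrite comp_assoc, W2. apply zm_r; auto.
  - intros h' E. apply Hh'. rewrite <- E, comp_assoc, W1. reflexivity.
Qed.

End Gen.
Arguments rw2 {C b c d f g h} _ {e} x.

Unset Implicit Arguments.

Ltac zt' := first [ assumption | apply zm_r; nf; assumption | apply zm_l; zt' | rewrite comp_assoc; zt' ].
Ltac zt := nf; zt'.

Ltac simp1 := match goal with
 | H : ?f \o ?g = _ |- context[?f \o ?g] => rewrite H
 | H : ?f \o ?g = _ |- context[?f \o (?g \o _)] => rewrite (rw2 H)
 end.
Ltac simp := nf; repeat (simp1; nf).

Theorem theorem1p8 (C : Category)
  (HC : homological C) (Hcol : has_finite_colimits C)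
  (A X Y : C) (x : Hom X A) (y : Hom Y A)
  (Hx : image_is_normal x) (Hy : image_is_normal y)
  (AX : C) (iX1 : Hom A AX) (iX2 : Hom X AX) (HAX : is_coproduct iX1 iX2)
  (AY : C) (iY1 : Hom A AY) (iY2 : Hom Y AY) (HAY : is_coproduct iY1 iY2)
  (rX0 : Hom AX A) (HrX0 : is_copair_id_zero iX1 iX2 rX0)
  (rY0 : Hom AY A) (HrY0 : is_copair_id_zero iY1 iY2 rY0)
  (cX : Hom AX A) (HcX : is_copair iX1 iX2 (idm A) x cX)
  (cY : Hom AY A) (HcY : is_copair iY1 iY2 (idm A) y cY)
  (P : C) (pi1 : Hom P AX) (pi2 : Hom P AY) (HP : is_pullback rX0 rY0 pi1 pi2)
  (QX : C) (qx : Hom A QX) (Hqx : is_cokernel x qx)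
  (QY : C) (qy : Hom A QY) (Hqy : is_cokernel y qy)
  (A3 : C) (a1 a2 a3 : Hom A3 A) (HA3 : is_A3 qx qy a1 a2 a3)
  (m : Hom P A)
  (Hm : internal_multiplication iX1 iY1 rX0 rY0 cX cY pi1 pi2 m) :
  exists p : Hom A3 A,
    factors_gamma1 rX0 cX cY pi1 pi2 a1 a2 a3 m p /\
    (forall p' : Hom A3 A, factors_gamma1 rX0 cX cY pi1 pi2 a1 a2 a3 m p' -> p' = p) /\
    internal_pregroupoid qx qy a1 a2 a3 p.
Proof.
  destruct HC as [Hpt [HR HS]]. pose proof HR as [HL _].
  destruct Hx as [IX [eX [moX [ReX [MX [Ex NX]]]]]].
  destruct Hy as [IY [eY [moY [ReY [MY [Ey NY]]]]]].
  destruct HrX0 as [RX1 RX2]. destruct HrY0 as [RY1 RY2].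
  destruct HcX as [CX1 CX2]. destruct HcY as [CY1 CY2].
  pose proof (nm Hpt ReX NX Ex Hqx) as KX.
  pose proof (nm Hpt ReY NY Ey Hqy) as KY.
  pose proof (proj1 Hqx) as Zqx. pose proof (proj1 Hqy) as Zqy.
  pose proof (proj1 KX) as Zqmx. pose proof (proj1 KY) as Zqmy.
  destruct (pb_ex HP _ (idm AX) (iY1 \o rX0)) as [s1 [S11 S12]].
  { rewrite comp_id_r, comp_assoc, RY1, comp_id_l. reflexivity. }
  destruct (pb_ex HP _ (iX1 \o rY0) (idm AY)) as [s2 [S21 S22]].
  { rewrite comp_id_r, comp_assoc, RX1, comp_id_l. reflexivity. }
  pose proof (proj1 Hm s1 S11 S12) as Ms1.
  pose proof (proj2 Hm s2 S21 S22) as Ms2.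
  assert (QXe : qx \o cX = qx \o rX0).
  { apply (cop_ext HAX); nf.
    - rewrite CX1, RX1. reflexivity.
    - rewrite CX2. apply zm_eq; [exact Zqx| zt]. }
  assert (QYe : qy \o cY = qy \o rY0).
  { apply (cop_ext HAY); nf.
    - rewrite CY1, RY1. reflexivity.
    - rewrite CY2. apply zm_eq; [exact Zqy| zt]. }
  destruct ((proj2 (proj2 HA3)) P (cX \o pi1) (rX0 \o pi1) (cY \o pi2)) as [g1 [[G1 [G2 G3]] _]].
  { rewrite !comp_assoc, QXe. reflexivity. }
  { rewrite (proj1 HP), !comp_assoc, QYe. reflexivity. }
  assert (Rg : regular_epi g1).
  { apply (ext_reg HR). intros S j g Mj Eg.
    destruct (proj2 HL _ _ _ qy qy) as [KYo [c1 [c2 HKY]]].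
    destruct ((proj2 (proj2 HA3)) KYo c1 c1 c2 eq_refl (proj1 HKY)) as [sg [[Sg1 [Sg2 Sg3]] _]].
    destruct (pb_ex HKY _ a2 a3 (proj1 (proj2 HA3))) as [rho [Rh1 Rh2]].
    assert (RS : rho \o sg = idm KYo).
    { apply (pb_ext HKY); rewrite comp_id_r, comp_assoc; [rewrite Rh1, Sg2|rewrite Rh2, Sg3]; reflexivity. }
    destruct (zm_ex Hpt IX A) as [z Hz].
    destruct (proj2 (proj2 HA3) IX moX z z) as [ka [[K1 [K2 K3]] _]].
    { apply zm_eq; [exact Zqmx | zt]. }
    { reflexivity. }
    assert (Hka : is_kernel rho ka).
    { split.
      - destruct (zm_ex Hpt IX KYo) as [zz Hzz]. replace (rho \o ka) with zz; auto.
        apply (pb_ext HKY); apply zm_eq; try zt.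
        + rewrite comp_assoc, Rh1, K2; auto.
        + rewrite comp_assoc, Rh2, K3; auto.
      - intros T u Hu.
        assert (Z1 : is_zero_mor (qx \o (a1 \o u))).
        { rewrite comp_assoc, (proj1 HA3), <- comp_assoc, <- Rh1, <- comp_assoc. zt. }
        destruct (proj2 KX _ _ Z1) as [h [Hh Hh']].
        exists h. split.
        + apply (A3ext HA3).
          * rewrite comp_assoc, K1. exact Hh.
          * rewrite comp_assoc, K2, <- Rh1. apply zm_eq; zt.
          * rewrite comp_assoc, K3, <- Rh2. apply zm_eq; zt.
        + intros h' E. apply Hh'. rewrite <- E, comp_assoc, K1. reflexivity. }
    destruct (strong (e:=eX) (j:=j) ka (g \o (s1 \o iX2)) ReX Mj) as [ka' [Ka' _]].
    { rewrite comp_assoc, <- Eg. apply (A3ext HA3); simp.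
      - rewrite Ex. reflexivity.
      - apply zm_eq; zt.
      - apply zm_eq; zt. }
    destruct (proj2 HL _ _ _ j sg) as [S' [j1 [j2 HS']]].
    pose proof (pb_mono HS' Mj) as Mj2.
    destruct (pb_ex HKY _ (idm A) (idm A) eq_refl) as [dY [D1 D2]].
    destruct (kp_ker Hpt KY (pb_sym HKY)) as [wY [W2 [W1 HwY]]].
    destruct (pb_ex HS' _ (g \o (s1 \o iX1)) dY) as [h1 [H11 H12]].
    { rewrite comp_assoc, <- Eg. apply (A3ext HA3); simp; reflexivity. }
    destruct (strong (e:=eY) (j:=j) (sg \o wY) (g \o (s2 \o iY2)) ReY Mj) as [r [Hr _]].
    { rewrite comp_assoc, <- Eg. apply (A3ext HA3); simp.
      - apply zm_eq; zt.
      - apply zm_eq; zt.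
      - rewrite Ey. reflexivity. }
    destruct (pb_ex HS' _ r wY Hr) as [h2 [H21 H22]].
    destruct (jx HS (q:=c1) (s:=dY) (k:=wY) (j:=j2) h1 h2 D1 HwY Mj2 (eq_sym H12) (eq_sym H22)) as [i2 [I1 I2]].
    assert (Es : sg = j \o (j1 \o i2)).
    { rewrite comp_assoc, (proj1 HS'), <- comp_assoc, I2, comp_id_r. reflexivity. }
    exact (jx HS (q:=rho) (s:=sg) (k:=ka) (j:=j) _ _ RS Hka Mj Es (eq_sym Ka')). }
  destruct (ker_ex Hpt HL g1) as [N [n Hn]].
  pose proof (proj1 Hn) as ZG.
  assert (Zn1 : is_zero_mor (cX \o (pi1 \o n))) by (rewrite comp_assoc, <- G1, <- comp_assoc; zt).
  assert (Zn2 : is_zero_mor (rX0 \o (pi1 \o n))) by (rewrite comp_assoc, <- G2, <- comp_assoc; zt).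
  assert (Zn3 : is_zero_mor (cY \o (pi2 \o n))) by (rewrite comp_assoc, <- G3, <- comp_assoc; zt).
  assert (Zn4 : is_zero_mor (rY0 \o (pi2 \o n))) by (rewrite comp_assoc, <- (proj1 HP), <- comp_assoc; exact Zn2).
  destruct (ker_ex Hpt HL (g1 \o s2)) as [N2 [n2 Hn2]].
  destruct (proj2 Hn2 _ (pi2 \o n)) as [qN [QN _]].
  { apply (A3zero Hpt HA3); simp; zt. }
  assert (Z2 := proj1 Hn2). repeat rewrite <- comp_assoc in Z2.
  destruct (proj2 Hn _ (s2 \o n2)) as [sN [SN _]]. { exact Z2. }
  assert (QS : qN \o sN = idm N2).
  { apply (mono_kernel Hn2). rewrite comp_id_r, comp_assoc, QN, <- comp_assoc, SN, comp_assoc, S22, comp_id_l. reflexivity. }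
  destruct (ker_ex Hpt HL qN) as [Kq [kq Hkq]].
  destruct (zm_ex Hpt N A) as [zN HzN].
  assert (Mn : m \o n = zN).
  { apply (je HS HL (q:=qN) (k:=kq) sN); auto.
    - apply zm_eq; [|zt].
      assert (E : n \o kq = s1 \o (pi1 \o (n \o kq))).
      { apply (pb_ext HP).
        - nf. rewrite (rw2 S11). nf. reflexivity.
        - apply zm_eq.
          + rewrite comp_assoc, <- QN, <- comp_assoc. apply zm_l. exact (proj1 Hkq).
          + simp. zt. }
      rewrite <- comp_assoc, E, (rw2 Ms1). clear E. zt.
    - rewrite <- comp_assoc, SN, (rw2 Ms2). apply zm_eq; [|zt].
      assert (Z3 : is_zero_mor (a3 \o (g1 \o (s2 \o n2)))) by zt.
      rewrite (rw2 G3) in Z3. repeat rewrite <- comp_assoc in Z3. rewrite (rw2 S22), comp_id_l in Z3. exact Z3. }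
  destruct (l3 HR HS Hpt (e:=g1) (ke:=n) m Rg Hn) as [p Hp].
  { rewrite Mn. exact HzN. }
  pose proof (regepi_epi Rg) as Epg.
  exists p. split; [|split].
  - intros g E1 E2 E3. replace g with g1; auto. apply (A3ext HA3); congruence.
  - intros p' Hp'. apply Epg. rewrite Hp. apply Hp'; auto.
  - split.
    + intros K k1 k2 HK t T1 T2 T3.
      destruct (pb_ex HK _ (idm A) (idm A) eq_refl) as [d [D1 D2]].
      destruct (kp_ker Hpt KX HK) as [w [W1 [W2 Hw]]].
      apply (je HS HL (q:=k2) (k:=w) d); auto.
      * apply (regepi_epi ReX).
        assert (E : t \o (w \o eX) = g1 \o (s1 \o iX2)).
        { apply (A3ext HA3); simp.
          - rewrite Ex. reflexivity.
          - apply zm_eq; zt.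
          - apply zm_eq; zt. }
        nf. rewrite E. clear E. simp. rewrite Ex. reflexivity.
      * assert (E : t \o d = g1 \o (s1 \o iX1)) by (apply (A3ext HA3); simp; reflexivity).
        nf. rewrite E. clear E. simp. reflexivity.
    + intros K k1 k2 HK t T1 T2 T3.
      destruct (pb_ex HK _ (idm A) (idm A) eq_refl) as [d [D1 D2]].
      destruct (kp_ker Hpt KY (pb_sym HK)) as [w [W1 [W2 Hw]]].
      apply (je HS HL (q:=k1) (k:=w) d); auto.
      * apply (regepi_epi ReY).
        assert (E : t \o (w \o eY) = g1 \o (s2 \o iY2)).
        { apply (A3ext HA3); simp.
          - apply zm_eq; zt.
          - apply zm_eq; zt.
          - rewrite Ey. reflexivity. }
        nf. rewrite E. clear E. simp. rewrite Ey. reflexivity.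
      * assert (E : t \o d = g1 \o (s2 \o iY1)) by (apply (A3ext HA3); simp; reflexivity).
        nf. rewrite E. clear E. simp. reflexivity.
Qed.
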